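(* Let $m>1$, $h>0$, $\Delta t>0$, let $M^*,S^*\in\mathbb{R}^{(m-1)\times(m-1)}$ be symmetric matrices and let $F\in\mathbb{R}^{m-1}$ be independent of time. Let $(U^n,\dot U^n,\ddot U^n)_{n\ge0}$ be sequences in $\mathbb{R}^{m-1}$ satisfying, for all $n\ge0$, the hybrid scheme $$U^{n+1}=U^n+\tfrac{\Delta t}{2}(\dot U^{n+1}+\dot U^n),\qquad \dot U^{n+1}=\dot U^n+\tfrac{\Delta t}{2}(\ddot U^{n+1}+\ddot U^n),$$ $$M^*\ddot U^{n+\frac12}+S^*U^{n+\frac12}=F+\frac{H(-u_1^n)}{2h}(u_1^n+u_1^{n+1})^+e_1+\frac{H(u_1^n)}{2h}\big((u_1^n)^++(u_1^{n+1})^+\big)e_1,$$ where $V^{n+\frac12}=\frac12(V^{n+1}+V^n)$, $u_1^n$ is the first component of $U^n$, $e_1=(1,0,\dots,0)^{\mathsf T}$, $s^+=\max(s,0)$, and $H(s)=1$ if $s>0$, $H(0)=\tfrac12$, $H(s)=0$ if $s<0$. Define the discrete energy $$\mathcal{E}^n=\tfrac12(\dot U^n)^{\mathsf T}M^*\dot U^n+\tfrac12(U^n)^{\mathsf T}S^*U^n-\tfrac1{2h}\big((u_1^n)^+\big)^2-(U^n)^{\mathsf T}F .$$ Then $\Delta\mathcal{E}^n:=\mathcal{E}^{n+1}-\mathcal{E}^n\le0$ for all $n>0$.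
   Context: In the paper, $M^*$ and $S^*$ are the (symmetric) reduced mass and stiffness matrices of a mass-redistributed $P_1$ finite element discretization of the 1D wave equation with a Signorini contact condition, the contact node having been eliminated; the claim only uses their symmetry. *)

(* Defs.v *)
From HB Require Import structures.
From mathcomp Require Import all_boot all_order all_algebra.
Set Implicit Arguments. Unset Strict Implicit. Unset Printing Implicit Defensive.
Import Order.TTheory GRing.Theory Num.Theory.
Local Open Scope ring_scope.

Section Defs.
Variable R : realFieldType.

Definition ppart (s : R) : R := Num.max s 0.

Definition heav (s : R) : R := if 0 < s then 1 else if s == 0 then 2^-1 else 0.

(* first component of a vector of R^k (0 if k = 0, never used since k = m-1 >= 1) *)
Definition comp1 (k : nat) : 'cV[R]_k -> R :=
  match k with
  | 0 => fun _ => 0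
  | k'.+1 => fun V => V ord0 ord0
  end.

Definition e1 (k : nat) : 'cV[R]_k := \col_i (if val i == 0%N then 1 else 0).

Definition qform (k : nat) (A : 'M[R]_k) (V : 'cV[R]_k) : R := (V^T *m A *m V) ord0 ord0.

Definition vdot (k : nat) (V W : 'cV[R]_k) : R := (V^T *m W) ord0 ord0.

Definition energy (k : nat) (h : R) (M S : 'M[R]_k) (F U Ud : 'cV[R]_k) : R :=
  2^-1 * qform M Ud + 2^-1 * qform S U - (2 * h)^-1 * (ppart (comp1 U)) ^+ 2
  - vdot U F.

Definition hybrid_step (k : nat) (h dt : R) (M S : 'M[R]_k) (F : 'cV[R]_k)
  (U Ud Udd : nat -> 'cV[R]_k) (n : nat) : Prop :=
  [/\ U n.+1 = U n + (dt / 2) *: (Ud n.+1 + Ud n),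
      Ud n.+1 = Ud n + (dt / 2) *: (Udd n.+1 + Udd n) &
      M *m (2^-1 *: (Udd n.+1 + Udd n)) + S *m (2^-1 *: (U n.+1 + U n)) =
        F + ((heav (- comp1 (U n)) / (2 * h)) * ppart (comp1 (U n) + comp1 (U n.+1))) *: e1 k
          + ((heav (comp1 (U n)) / (2 * h)) * (ppart (comp1 (U n)) + ppart (comp1 (U n.+1)))) *: e1 k].

End Defs.

(* Main.v *)
Require Import Defs.
From HB Require Import structures.
From mathcomp Require Import all_boot all_order all_algebra.
From mathcomp Require Import ring lra.
Import Order.TTheory GRing.Theory Num.Theory.
Local Open Scope ring_scope.

Section L.
Variable R : realFieldType.
Variable k : nat.
Implicit Types V W X : 'cV[R]_k.

Lemma vdotE V W : vdot V W = \sum_i V i ord0 * W i ord0.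
Proof. by rewrite /vdot mxE; apply: eq_bigr => i _; rewrite mxE. Qed.

Lemma vdotDl V W X : vdot (V + W) X = vdot V X + vdot W X.
Proof. rewrite !vdotE -big_split /=; apply: eq_bigr => i _; rewrite !mxE; ring. Qed.
Lemma vdotDr V W X : vdot X (V + W) = vdot X V + vdot X W.
Proof. rewrite !vdotE -big_split /=; apply: eq_bigr => i _; rewrite !mxE; ring. Qed.
Lemma vdotZl a V W : vdot (a *: V) W = a * vdot V W.
Proof. rewrite !vdotE mulr_sumr; apply: eq_bigr => i _; rewrite !mxE; ring. Qed.
Lemma vdotZr a V W : vdot W (a *: V) = a * vdot W V.
Proof. rewrite !vdotE mulr_sumr; apply: eq_bigr => i _; rewrite !mxE; ring. Qed.
Lemma vdotNl V W : vdot (- V) W = - vdot V W.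
Proof. by rewrite -scaleN1r vdotZl mulN1r. Qed.
Lemma vdotNr V W : vdot W (- V) = - vdot W V.
Proof. by rewrite -scaleN1r vdotZr mulN1r. Qed.
Lemma vdotC V W : vdot V W = vdot W V.
Proof. rewrite !vdotE; apply: eq_bigr => i _; ring. Qed.

Lemma vdot_sym (A : 'M[R]_k) V W : A^T = A -> vdot V (A *m W) = vdot W (A *m V).
Proof.
move=> HA; rewrite /vdot !mulmxA.
have -> : V^T *m A *m W = (W^T *m A *m V)^T by rewrite !trmx_mul HA trmxK mulmxA.
by rewrite mxE.
Qed.

Lemma qformE (A : 'M[R]_k) V : qform A V = vdot V (A *m V).
Proof. by rewrite /qform /vdot mulmxA. Qed.

Lemma qform_diff (A : 'M[R]_k) V W : A^T = A ->
  qform A V - qform A W = vdot (V - W) (A *m (V + W)).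
Proof.
move=> HA; rewrite !qformE mulmxDr vdotDl vdotNl !vdotDr (vdot_sym _ V W HA); ring.
Qed.

End L.

Lemma vdot_e1 (R : realFieldType) k (V : 'cV[R]_k.+1) : vdot V (e1 R k.+1) = V ord0 ord0.
Proof.
rewrite vdotE (bigD1 ord0) //= big1 ?mxE /= ?mulr1 ?addr0 //.
by move=> i Hi; rewrite mxE ifF ?mulr0 //; apply/negbTE; move: Hi; apply: contra => /eqP H; apply/eqP/val_inj.
Qed.

Lemma maxcase (R : realFieldType) (y : R) :
  (y <= 0 /\ Num.max y 0 = 0) \/ (0 < y /\ Num.max y 0 = y).
Proof. by case: (leP y 0) => h; [left|right]; split. Qed.

Lemma scalar_ineq (R : realFieldType) (a x : R) :
  x * (heav (- a) * ppart (a + (a + x)) + heav a * (ppart a + ppart (a + x)))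
  - ppart (a + x) ^+ 2 + ppart a ^+ 2 <= 0.
Proof.
rewrite /heav /ppart.
have [[h0 ->]|[h0 ->]] := maxcase _ a;
have [[h1 ->]|[h1 ->]] := maxcase _ (a + (a + x));
have [[h2 ->]|[h2 ->]] := maxcase _ (a + x);
have [ha|ha|ha] := ltrgtP a 0; rewrite ?oppr_gt0 ?ha ?oppr0 ?ltxx ?eqxx /=;
try (rewrite ?(ltNge a 0) ?(ltW ha) /= ?oppr_eq0 ?(gt_eqF ha) /=); try nra.
Qed.

Lemma main_k (R : realFieldType) (k : nat) (h dt : R)
  (M S : 'M[R]_k.+1) (F : 'cV[R]_k.+1)
  (U Ud Udd : nat -> 'cV[R]_k.+1) (n : nat) :
  0 < h -> M^T = M -> S^T = S -> hybrid_step h dt M S F U Ud Udd n ->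
  energy h M S F (U n.+1) (Ud n.+1) - energy h M S F (U n) (Ud n) <= 0.
Proof.
move=> hpos HM HS [HU HUd Heq].
set b := U n.+1 in HU Heq *; set a := U n in HU Heq *.
set b' := Ud n.+1 in HU HUd *; set a' := Ud n in HU HUd *.
set e := Udd n.+1 + Udd n in HUd Heq.
set d := b' + a' in HU.
have E1 : energy h M S F b b' - energy h M S F a a' =
  2^-1 * (qform M b' - qform M a') + 2^-1 * (qform S b - qform S a)
  - (2 * h)^-1 * (ppart (comp1 b) ^+ 2 - ppart (comp1 a) ^+ 2) - vdot (b - a) F.
  by rewrite /energy vdotDl vdotNl; ring.
have Hba : b - a = (dt / 2) *: d by rewrite HU addrAC subrr add0r.
have Hba' : b' - a' = (dt / 2) *: e by rewrite HUd addrAC subrr add0r.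
rewrite E1 !qform_diff // Hba Hba' !vdotZl (vdot_sym _ _ _ e d HM).
have := congr1 (vdot d) Heq.
rewrite -!scalemxAr !vdotDr !vdotZr !vdot_e1 => Hq.
have Hb1 : b ord0 ord0 = a ord0 ord0 + dt / 2 * d ord0 ord0.
  by rewrite HU !mxE.
rewrite /= in Hq *.
set q1 := vdot d (M *m e) in Hq *; set q2 := vdot d (S *m (b + a)) in Hq *.
set f := vdot d F in Hq *.
have -> : 2^-1 * (dt / 2 * q1) + 2^-1 * (dt / 2 * q2) -
   (2 * h)^-1 * (ppart (b ord0 ord0) ^+ 2 - ppart (a ord0 ord0) ^+ 2) -
   dt / 2 * f = dt / 2 * (2^-1 * q1 + 2^-1 * q2 - f) -
   (2 * h)^-1 * (ppart (b ord0 ord0) ^+ 2 - ppart (a ord0 ord0) ^+ 2) by ring.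
rewrite Hq.
have key := scalar_ineq _ (a ord0 ord0) (dt / 2 * d ord0 ord0).
rewrite -Hb1 in key.
set K := (X in X <= 0) in key.
have h2 : 0 < (2 * h)^-1 by rewrite invr_gt0 mulr_gt0.
apply: le_trans (_ : (2 * h)^-1 * K <= 0); last by rewrite pmulr_rle0.
rewrite le_eqVlt; apply/orP; left; apply/eqP; rewrite /K; ring.
Qed.
Theorem lemma5p1 (R : realFieldType) (m : nat) (h dt : R)
  (M S : 'M[R]_(m.-1)) (F : 'cV[R]_(m.-1))
  (U Ud Udd : nat -> 'cV[R]_(m.-1)) :
  (1 < m)%N -> 0 < h -> 0 < dt ->
  M^T = M -> S^T = S ->
  (forall n : nat, hybrid_step h dt M S F U Ud Udd n) ->
  forall n : nat, (0 < n)%N ->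
    energy h M S F (U n.+1) (Ud n.+1) - energy h M S F (U n) (Ud n) <= 0.
Proof.
case: m M S F U Ud Udd => [|[|k]] M S F U Ud Udd // _ hpos _ HM HS Hs n _.
exact: main_k hpos HM HS (Hs n).
Qed.
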